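(* Let $n\ge2$ and consider the sequential distributive $n$-site phosphorylation system with positive rate constants $k_{\mathrm{on}_i},k_{\mathrm{off}_i},k_{\mathrm{cat}_i},\ell_{\mathrm{on}_i},\ell_{\mathrm{off}_i},\ell_{\mathrm{cat}_i}$ ($i=0,\dots,n-1$) and positive total amounts $S_{tot},E_{tot},F_{tot}$. Assume \[ S_{tot}>F_{tot}. \] Then there is a choice of rate constants for which the system is multistationary. More explicitly, for any choice of positive $k_{\mathrm{cat}_1},\ell_{\mathrm{cat}_1}$ satisfying \[ \frac{k_{\mathrm{cat}_1}}{\ell_{\mathrm{cat}_1}}>\max\left\{\frac{F_{tot}}{S_{tot}-F_{tot}},\frac{F_{tot}}{E_{tot}}\right\}, \] fix any values of the remaining rate constants and positive numbers $h_4,\dots,h_{2n+3}$ such that $i\,h_{n+5}<h_{i+3}$ for $i=1,\dots,n$ and $(i-1)\,h_{n+5}<h_{n+i+3}$ for $i\in\{1,3,4,\dots,n\}$. Then there exists $t_0>0$ such that for any $t\in(0,t_0)$ the system (with the same $S_{tot},E_{tot},F_{tot}$) is multistationary after the rescalings \[ k_{\mathrm{on}_0}\mapsto t^{h_{n+4}}k_{\mathrm{on}_0},\quad k_{\mathrm{on}_i}\mapsto t^{h_{n+4+i}-h_{i+3}}k_{\mathrm{on}_i}\ (i=1,\dots,n-1),\quad \ell_{\mathrm{on}_i}\mapsto t^{h_{n+4+i}-h_{i+4}}\ell_{\mathrm{on}_i}\ (i=0,\dots,n-1). \] Similarly, for any fixed choice of rate constants and total conservation constants satisfying the two displayed inequalities,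 there exist positive constants $M_1,\dots,M_{4n-2}$ such that for any positive $\gamma_1,\dots,\gamma_{2n}$ verifying \[ \gamma_i<M_i\ (i=1,\dots,2n),\qquad \frac{\gamma_i}{\gamma_{n+2}^{\,i}}<M_{2n+i}\ (i=1,\dots,n),\qquad \frac{\gamma_{n+i}}{\gamma_{n+2}^{\,i-1}}<M_{3n-2+i}\ (i=3,\dots,n), \] the rescaling \[ k_{\mathrm{on}_0}\mapsto\gamma_{n+1}k_{\mathrm{on}_0},\quad k_{\mathrm{on}_i}\mapsto\frac{\gamma_{n+1+i}}{\gamma_i}k_{\mathrm{on}_i}\ (i=1,\dots,n-1),\quad \ell_{\mathrm{on}_i}\mapsto\frac{\gamma_{n+1+i}}{\gamma_{i+1}}\ell_{\mathrm{on}_i}\ (i=0,\dots,n-1) \] (all other constants unchanged) gives rise to a multistationary system.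
   Context: The sequential distributive $n$-site phosphorylation network has species $S_0,\dots,S_n$ (substrate with $i$ phosphate groups), kinase $E$, phosphatase $F$, and intermediates $ES_0,\dots,ES_{n-1}$, $FS_1,\dots,FS_n$, with reactions $S_i+E\rightleftarrows ES_i$ (forward $k_{\mathrm{on}_i}$, backward $k_{\mathrm{off}_i}$), $ES_i\to S_{i+1}+E$ ($k_{\mathrm{cat}_i}$), $S_{i+1}+F\rightleftarrows FS_{i+1}$ (forward $\ell_{\mathrm{on}_i}$, backward $\ell_{\mathrm{off}_i}$), $FS_{i+1}\to S_i+F$ ($\ell_{\mathrm{cat}_i}$), $i=0,\dots,n-1$. With concentrations $s_0,\dots,s_n,e,f$, $y_i$ of $ES_i$ and $u_i$ of $FS_{i+1}$, the mass-action system is \[ \begin{aligned} \dot s_0&=-k_{\mathrm{on}_0}s_0e+k_{\mathrm{off}_0}y_0+\ell_{\mathrm{cat}_0}u_0,\\ \dot s_i&=k_{\mathrm{cat}_{i-1}}y_{i-1}-k_{\mathrm{on}_i}s_ie+k_{\mathrm{off}_i}y_i+\ell_{\mathrm{cat}_i}u_i-\ell_{\mathrm{on}_{i-1}}s_if+\ell_{\mathrm{off}_{i-1}}u_{i-1},\quad 1\le i\le n-1,\\ \dot s_n&=k_{\mathrm{cat}_{n-1}}y_{n-1}-\ell_{\mathrm{on}_{n-1}}s_nf+\ell_{\mathrm{off}_{n-1}}u_{n-1},\\ \dot y_i&=k_{\mathrm{on}_i}s_ie-(k_{\mathrm{off}_i}+k_{\mathrm{cat}_i})y_i,\quad \dot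 u_i=\ell_{\mathrm{on}_i}s_{i+1}f-(\ell_{\mathrm{off}_i}+\ell_{\mathrm{cat}_i})u_i,\quad 0\le i\le n-1,\\ \dot e&=-\textstyle\sum_i\dot y_i,\qquad \dot f=-\sum_i\dot u_i, \end{aligned} \] with conservation laws $\sum_{i=0}^ns_i+\sum_{i=0}^{n-1}y_i+\sum_{i=0}^{n-1}u_i=S_{tot}$, $e+\sum_iy_i=E_{tot}$, $f+\sum_iu_i=F_{tot}$. The system is multistationary (for given rate constants and totals) if there are at least two positive points (all concentrations $>0$) at which all right-hand sides vanish and the three conservation laws hold with the given $S_{tot},E_{tot},F_{tot}$. *)

(* Defs.v *)
From Stdlib Require Import Reals Lra Lia.
Open Scope R_scope.

Fixpoint sumR (m : nat) (g : nat -> R) : R :=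
  match m with
  | O => 0
  | S m' => sumR m' g + g m'
  end.

(* Rate constants are indexed 0..n-1; substrate
   concentrations s 0..s n; y i = [ES_i], u i = [FS_{i+1}], i = 0..n-1;
   e = [E], f = [F]. *)
Definition ds (n : nat) (kon koff kcat lon loff lcat : nat -> R)
  (s y u : nat -> R) (e f : R) (i : nat) : R :=
  if Nat.eqb i 0 then
    - kon 0%nat * s 0%nat * e + koff 0%nat * y 0%nat + lcat 0%nat * u 0%nat
  else if Nat.eqb i n then
    kcat (n-1)%nat * y (n-1)%nat - lon (n-1)%nat * s n * f
      + loff (n-1)%nat * u (n-1)%nat
  else
    kcat (i-1)%nat * y (i-1)%nat - kon i * s i * e + koff i * y i
      + lcat i * u i - lon (i-1)%nat * s i * f + loff (i-1)%nat * u (i-1)%nat.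

Definition dy (kon koff kcat : nat -> R) (s y : nat -> R) (e : R) (i : nat) : R :=
  kon i * s i * e - (koff i + kcat i) * y i.

Definition du (lon loff lcat : nat -> R) (s u : nat -> R) (f : R) (i : nat) : R :=
  lon i * s (S i) * f - (loff i + lcat i) * u i.

Definition pos_steady_state (n : nat) (kon koff kcat lon loff lcat : nat -> R)
  (Stot Etot Ftot : R) (s y u : nat -> R) (e f : R) : Prop :=
  (forall i, (i <= n)%nat -> 0 < s i) /\
  (forall i, (i < n)%nat -> 0 < y i /\ 0 < u i) /\
  0 < e /\ 0 < f /\
  (forall i, (i <= n)%nat -> ds n kon koff kcat lon loff lcat s y u e f i = 0) /\
  (forall i, (i < n)%nat -> dy kon koff kcat s y e i = 0 /\
                           du lon loff lcat s u f i = 0) /\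
  - sumR n (dy kon koff kcat s y e) = 0 /\
  - sumR n (du lon loff lcat s u f) = 0 /\
  sumR (S n) s + sumR n y + sumR n u = Stot /\
  e + sumR n y = Etot /\
  f + sumR n u = Ftot.

Definition distinct_points (n : nat) (s1 y1 u1 : nat -> R) (e1 f1 : R)
  (s2 y2 u2 : nat -> R) (e2 f2 : R) : Prop :=
  (exists i, (i <= n)%nat /\ s1 i <> s2 i) \/
  (exists i, (i < n)%nat /\ (y1 i <> y2 i \/ u1 i <> u2 i)) \/
  e1 <> e2 \/ f1 <> f2.

Definition multistationary (n : nat) (kon koff kcat lon loff lcat : nat -> R)
  (Stot Etot Ftot : R) : Prop :=
  exists (s1 y1 u1 : nat -> R) (e1 f1 : R) (s2 y2 u2 : nat -> R) (e2 f2 : R),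
    pos_steady_state n kon koff kcat lon loff lcat Stot Etot Ftot s1 y1 u1 e1 f1 /\
    pos_steady_state n kon koff kcat lon loff lcat Stot Etot Ftot s2 y2 u2 e2 f2 /\
    distinct_points n s1 y1 u1 e1 f1 s2 y2 u2 e2 f2.

Definition pos_rates (n : nat) (k : nat -> R) : Prop :=
  forall i, (i < n)%nat -> 0 < k i.

(* Main.v *)
Require Import Defs.
From Stdlib Require Import Reals Lra Lia Ranalysis5 FunctionalExtensionality.
Open Scope R_scope.


Lemma sumR_ext m F G : (forall i, (i < m)%nat -> F i = G i) -> sumR m F = sumR m G.
Proof.
  induction m; intros H; simpl; auto.
  rewrite IHm by (intros; apply H; lia). rewrite H by lia. reflexivity.
Qed.

Lemma sumR_le m F G : (forall i, (i < m)%nat -> F i <= G i) -> sumR m F <= sumR m G.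
Proof.
  induction m; intros H; simpl; [lra|].
  assert (sumR m F <= sumR m G) by (apply IHm; intros; apply H; lia).
  assert (F m <= G m) by (apply H; lia). lra.
Qed.

Lemma sumR_zero m : sumR m (fun _ => 0) = 0.
Proof. induction m; simpl; lra. Qed.

Lemma sumR_nonneg m F : (forall i, (i < m)%nat -> 0 <= F i) -> 0 <= sumR m F.
Proof. intros H. rewrite <- (sumR_zero m). apply sumR_le. auto. Qed.

Lemma sumR_pos m F : (1 <= m)%nat -> (forall i, (i < m)%nat -> 0 < F i) -> 0 < sumR m F.
Proof.
  destruct m as [|m]; intros Hm H; [lia|]. simpl.
  assert (0 <= sumR m F) by (apply sumR_nonneg; intros; left; apply H; lia).
  assert (0 < F m) by (apply H; lia). lra.
Qed.

Lemma sumR_scal m c F : sumR m (fun i => c * F i) = c * sumR m F.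
Proof. induction m; simpl; [ring|]. rewrite IHm. ring. Qed.

Lemma sumR_plus m F G : sumR m (fun i => F i + G i) = sumR m F + sumR m G.
Proof. induction m; simpl; [ring|]. rewrite IHm. ring. Qed.

Lemma sumR_term m F k : (k < m)%nat -> (forall i, (i < m)%nat -> 0 <= F i) -> F k <= sumR m F.
Proof.
  induction m; intros Hk H; [lia|]. simpl.
  destruct (Nat.eq_dec k m) as [->|Hne].
  - assert (0 <= sumR m F) by (apply sumR_nonneg; intros; apply H; lia). lra.
  - assert (F k <= sumR m F) by (apply IHm; [lia| intros; apply H; lia]).
    assert (0 <= F m) by (apply H; lia). lra.
Qed.

Lemma sumR_split m F k : (k < m)%nat ->
  sumR m F = F k + sumR m (fun i => if Nat.eqb i k then 0 else F i).
Proof.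
  induction m; intros Hk; [lia|]. simpl.
  destruct (Nat.eq_dec k m) as [->|Hne].
  - rewrite Nat.eqb_refl.
    rewrite (sumR_ext m (fun i => if Nat.eqb i m then 0 else F i) F).
    + ring.
    + intros i Hi. destruct (Nat.eqb_spec i m); [lia|auto].
  - rewrite IHm by lia. destruct (Nat.eqb_spec m k); [lia|]. ring.
Qed.

Lemma cp_plus f g x : continuity_pt f x -> continuity_pt g x -> continuity_pt (fun y => f y + g y) x.
Proof. intros. exact (continuity_pt_plus f g x H H0). Qed.
Lemma cp_minus f g x : continuity_pt f x -> continuity_pt g x -> continuity_pt (fun y => f y - g y) x.
Proof. intros. exact (continuity_pt_minus f g x H H0). Qed.
Lemma cp_mult f g x : continuity_pt f x -> continuity_pt g x -> continuity_pt (fun y => f y * g y) x.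
Proof. intros. exact (continuity_pt_mult f g x H H0). Qed.
Lemma cp_div f g x : continuity_pt f x -> continuity_pt g x -> g x <> 0 -> continuity_pt (fun y => f y / g y) x.
Proof. intros. exact (continuity_pt_div f g x H H0 H1). Qed.
Lemma cp_const c x : continuity_pt (fun _ => c) x.
Proof. apply continuity_pt_const. intros a b; reflexivity. Qed.
Lemma cp_id x : continuity_pt (fun y => y) x.
Proof. exact (derivable_continuous_pt _ _ (derivable_pt_id x)). Qed.
Lemma cp_abs f x : continuity_pt f x -> continuity_pt (fun y => Rabs (f y)) x.
Proof. intros H. exact (continuity_pt_comp f Rabs x H (Rcontinuity_abs (f x))). Qed.
Lemma cp_sumR m F x : (forall i, continuity_pt (fun y => F y i) x) ->
  continuity_pt (fun y => sumR m (F y)) x.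
Proof.
  induction m; intros H; simpl.
  - apply cp_const.
  - apply cp_plus; auto.
Qed.

Lemma eventually_pos f : continuity_pt f 0 -> 0 < f 0 ->
  exists eta, 0 < eta /\ forall t, 0 <= t <= eta -> 0 < f t.
Proof.
  intros Hc Hf.
  destruct (Hc (f 0 / 2)) as [alp [Halp H]]; [lra|].
  exists (alp/2). split; [lra|]. intros t Ht.
  destruct (Req_dec t 0) as [->|Hne]; [lra|].
  assert (Hd: R_dist (f t) (f 0) < f 0 / 2).
  { apply H. split. split; [exact I| auto]. simpl. unfold R_dist. rewrite Rminus_0_r, Rabs_right; lra. }
  unfold R_dist in Hd. apply Rabs_def2 in Hd. lra.
Qed.


Section Generic.
Variables (n : nat) (kon koff kcat lon loff lcat : nat -> R) (Stot Etot Ftot : R).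
Hypothesis Hn : (1 <= n)%nat.
Hypothesis Hkon : pos_rates n kon.
Hypothesis Hkoff : pos_rates n koff.
Hypothesis Hkcat : pos_rates n kcat.
Hypothesis Hlon : pos_rates n lon.
Hypothesis Hloff : pos_rates n loff.
Hypothesis Hlcat : pos_rates n lcat.
Hypothesis HS : 0 < Stot.
Hypothesis HE : 0 < Etot.
Hypothesis HF : 0 < Ftot.

Definition Kc i := kon i / (koff i + kcat i).
Definition Lc i := lon i / (loff i + lcat i).
Definition rh i := kcat i / lcat i.
Definition aa i := kcat i * Kc i / (lcat i * Lc i).
Fixpoint sgm (x : R) (i : nat) : R :=
  match i with O => 1 | S j => sgm x j * aa j * x end.
Definition PP x := sumR n (fun i => Kc i * sgm x i).
Definition QQ x := sumR n (fun i => rh i * Kc i * sgm x i).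
Definition SS x := sumR (S n) (sgm x).
Definition zf x := (x * Ftot - Etot) / (x * QQ x - PP x).
Definition ef x := Etot - zf x * PP x.
Definition max0 a := (a + Rabs a) / 2.
Definition Hf x := zf x * SS x + max0 (ef x) * (zf x * (PP x + QQ x) - Stot).

Lemma Kc_pos i : (i < n)%nat -> 0 < Kc i.
Proof. intros H. unfold Kc. specialize (Hkon i H). specialize (Hkoff i H). specialize (Hkcat i H).
  apply Rdiv_lt_0_compat; lra. Qed.
Lemma Lc_pos i : (i < n)%nat -> 0 < Lc i.
Proof. intros H. unfold Lc. specialize (Hlon i H). specialize (Hloff i H). specialize (Hlcat i H).
  apply Rdiv_lt_0_compat; lra. Qed.
Lemma rh_pos i : (i < n)%nat -> 0 < rh i.
Proof. intros H. unfold rh. specialize (Hkcat i H). specialize (Hlcat i H).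
  apply Rdiv_lt_0_compat; lra. Qed.
Lemma aa_pos i : (i < n)%nat -> 0 < aa i.
Proof. intros H. unfold aa. pose proof (Kc_pos i H). pose proof (Lc_pos i H).
  specialize (Hkcat i H). specialize (Hlcat i H).
  apply Rdiv_lt_0_compat; apply Rmult_lt_0_compat; lra. Qed.

Lemma sig_pos x i : 0 < x -> (i <= n)%nat -> 0 < sgm x i.
Proof.
  intros Hx. induction i; intros Hi; simpl; [lra|].
  pose proof (aa_pos i ltac:(lia)). pose proof (IHi ltac:(lia)).
  apply Rmult_lt_0_compat; [apply Rmult_lt_0_compat|]; assumption.
Qed.

Lemma sig_scale x i : sgm x i = sgm 1 i * x ^ i.
Proof. induction i; simpl; [ring|]. rewrite IHi. ring. Qed.

Lemma max0_pos a : 0 < a -> max0 a = a.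
Proof. intros. unfold max0. rewrite Rabs_right; lra. Qed.
Lemma max0_nonpos a : a <= 0 -> max0 a = 0.
Proof. intros. unfold max0. rewrite Rabs_left1; lra. Qed.

Lemma SS_pos x : 0 < x -> 0 < SS x.
Proof. intros. unfold SS. apply sumR_pos; [lia|]. intros; apply sig_pos; auto; lia. Qed.
Lemma PP_pos x : 0 < x -> 0 < PP x.
Proof. intros. unfold PP. apply sumR_pos; auto. intros.
  apply Rmult_lt_0_compat; [apply Kc_pos; auto| apply sig_pos; auto; lia]. Qed.
Lemma QQ_pos x : 0 < x -> 0 < QQ x.
Proof. intros. unfold QQ. apply sumR_pos; auto. intros.
  apply Rmult_lt_0_compat; [apply Rmult_lt_0_compat|]; [apply rh_pos; auto|apply Kc_pos; auto| apply sig_pos; auto; lia]. Qed.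

Definition Bgen := 1 + sumR n (fun i => / rh i).

Lemma den_pos x : Bgen <= x -> 0 < x * QQ x - PP x.
Proof.
  intros Hx.
  assert (Hx0 : 0 < x).
  { unfold Bgen in Hx. assert (0 <= sumR n (fun i => / rh i)).
    { apply sumR_nonneg. intros. left. apply Rinv_0_lt_compat, rh_pos; auto. } lra. }
  replace (x * QQ x - PP x) with (sumR n (fun i => Kc i * sgm x i * (rh i * x - 1))).
  2:{ unfold QQ, PP. rewrite <- sumR_scal.
      replace (sumR n (fun i => x * (rh i * Kc i * sgm x i)) - sumR n (fun i => Kc i * sgm x i))
        with (sumR n (fun i => x * (rh i * Kc i * sgm x i)) + sumR n (fun i => -1 * (Kc i * sgm x i)))
        by (rewrite (sumR_scal n (-1)); ring).
      rewrite <- sumR_plus. apply sumR_ext. intros. ring. }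
  apply sumR_pos; auto. intros i Hi.
  apply Rmult_lt_0_compat; [apply Rmult_lt_0_compat; [apply Kc_pos; auto| apply sig_pos; auto; lia]|].
  assert (/ rh i <= sumR n (fun i => / rh i)).
  { apply (sumR_term n (fun i => / rh i)); auto. intros. left. apply Rinv_0_lt_compat, rh_pos; auto. }
  pose proof (rh_pos i Hi).
  assert (/ rh i < x) by (unfold Bgen in Hx; lra).
  apply Rmult_lt_compat_l with (r := rh i) in H1; auto.
  rewrite Rinv_r in H1; lra.
Qed.


Section Point.
Variables (x s0 e : R).
Hypothesis Hx : 0 < x.
Definition sF i := s0 * sgm x i.
Definition yF i := Kc i * sF i * e.
Definition uF i := Lc i * sF (S i) * (e / x).

Lemma L_flux j : (j < n)%nat -> lcat j * uF j = kcat j * yF j.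
Proof.
  intros Hj. unfold uF, yF, sF. simpl. unfold aa.
  pose proof (Lc_pos j Hj). pose proof (Hlcat j Hj). field. lra.
Qed.

Lemma uF_rh j : (j < n)%nat -> uF j = rh j * yF j.
Proof.
  intros Hj. pose proof (L_flux j Hj). pose proof (Hlcat j Hj). unfold rh.
  apply Rmult_eq_reg_l with (lcat j); [|lra]. rewrite H. field. lra.
Qed.

Lemma L0 i : (i < n)%nat -> - kon i * sF i * e + koff i * yF i + lcat i * uF i = 0.
Proof.
  intros Hi. rewrite L_flux by auto. unfold yF, Kc.
  pose proof (Hkoff i Hi). pose proof (Hkcat i Hi). field. lra.
Qed.

Lemma L1 j : (j < n)%nat -> kcat j * yF j - lon j * sF (S j) * (e / x) + loff j * uF j = 0.
Proof.
  intros Hj. pose proof (L_flux j Hj).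
  assert (lon j * sF (S j) * (e / x) = (loff j + lcat j) * uF j).
  { unfold uF, Lc. pose proof (Hloff j Hj). pose proof (Hlcat j Hj). field. lra. }
  lra.
Qed.

Lemma ds_zero i : (i <= n)%nat -> ds n kon koff kcat lon loff lcat sF yF uF e (e / x) i = 0.
Proof.
  intros Hi. unfold ds. destruct i as [|j].
  - simpl. apply L0. lia.
  - replace (S j - 1)%nat with j by lia. destruct (Nat.eqb_spec (S j) 0); [lia|].
    destruct (Nat.eqb_spec (S j) n) as [E|E].
    + rewrite <- E. replace (S j - 1)%nat with j by lia. apply L1. lia.
    + pose proof (L1 j ltac:(lia)). pose proof (L0 (S j) ltac:(lia)). lra.
Qed.

Lemma dy_zero i : (i < n)%nat -> dy kon koff kcat sF yF e i = 0.
Proof. intros Hi. unfold dy, yF, Kc. pose proof (Hkoff i Hi). pose proof (Hkcat i Hi). field. lra. Qed.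
Lemma du_zero i : (i < n)%nat -> du lon loff lcat sF uF (e / x) i = 0.
Proof. intros Hi. unfold du, uF, Lc. pose proof (Hloff i Hi). pose proof (Hlcat i Hi). field. lra. Qed.

Lemma sum_s : sumR (S n) sF = s0 * SS x.
Proof. unfold SS, sF. rewrite <- sumR_scal. reflexivity. Qed.
Lemma sum_y : sumR n yF = s0 * e * PP x.
Proof. unfold PP. rewrite <- sumR_scal. apply sumR_ext. intros. unfold yF, sF. ring. Qed.
Lemma sum_u : sumR n uF = s0 * e * QQ x.
Proof. unfold QQ. rewrite <- sumR_scal. apply sumR_ext. intros. rewrite uF_rh by auto. unfold yF, sF. ring. Qed.

End Point.

Lemma ef_pos x : 0 < x -> 0 < zf x -> Hf x = 0 -> 0 < ef x.
Proof.
  intros Hx Hz H. destruct (Rlt_or_le 0 (ef x)) as [h|h]; auto.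
  exfalso. unfold Hf in H. rewrite max0_nonpos in H by auto.
  pose proof (SS_pos x Hx). pose proof (Rmult_lt_0_compat _ _ Hz H0). lra.
Qed.

Lemma steady x : 0 < x -> 0 < x * QQ x - PP x -> 0 < zf x -> Hf x = 0 ->
  pos_steady_state n kon koff kcat lon loff lcat Stot Etot Ftot
   (sF x (zf x / ef x)) (yF x (zf x / ef x) (ef x)) (uF x (zf x / ef x) (ef x)) (ef x) (ef x / x).
Proof.
  intros Hx Hd Hz H0.
  pose proof (ef_pos x Hx Hz H0) as He.
  assert (Hs0 : 0 < zf x / ef x) by (apply Rdiv_lt_0_compat; auto).
  unfold pos_steady_state. split; [|split; [|split; [|split; [|split; [|split; [|split; [|split; [|split; [|split]]]]]]]]].
  - intros i Hi. unfold sF. apply Rmult_lt_0_compat; auto. apply sig_pos; auto.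
  - intros i Hi. unfold yF, uF, sF. split.
    + apply Rmult_lt_0_compat; auto. apply Rmult_lt_0_compat; [apply Kc_pos; auto|].
      apply Rmult_lt_0_compat; auto. apply sig_pos; auto; lia.
    + apply Rmult_lt_0_compat; [|apply Rdiv_lt_0_compat; auto]. apply Rmult_lt_0_compat; [apply Lc_pos; auto|].
      apply Rmult_lt_0_compat; auto. apply sig_pos; auto; lia.
  - auto.
  - apply Rdiv_lt_0_compat; auto.
  - intros; apply ds_zero; auto.
  - intros; split; [apply dy_zero|apply du_zero]; auto.
  - rewrite (sumR_ext n _ (fun _ => 0)); [rewrite sumR_zero; ring|]. intros; apply dy_zero; auto.
  - rewrite (sumR_ext n _ (fun _ => 0)); [rewrite sumR_zero; ring|]. intros; apply du_zero; auto.
  - rewrite sum_s, sum_y, sum_u by auto.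
    unfold Hf in H0. rewrite max0_pos in H0 by auto.
    apply Rmult_eq_reg_l with (ef x); [|lra].
    field_simplify; [|lra]. apply Rminus_diag_uniq. rewrite <- H0. ring.
  - rewrite sum_y by auto. replace (zf x / ef x * ef x) with (zf x) by (field; lra). unfold ef. ring.
  - rewrite sum_u by auto. replace (zf x / ef x * ef x) with (zf x) by (field; lra). unfold ef, zf. field. lra.
Qed.


Lemma sig_cont i a : continuity_pt (fun x => sgm x i) a.
Proof.
  induction i; simpl.
  - apply cp_const.
  - apply (cp_mult (fun y => sgm y i * aa i) (fun y => y)); [|apply cp_id].
    apply (cp_mult (fun y => sgm y i) (fun _ => aa i)); [auto|apply cp_const].
Qed.

Lemma PP_cont a : continuity_pt PP a.
Proof. unfold PP. apply (cp_sumR n (fun y i => Kc i * sgm y i)). intros i.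
  apply (cp_mult (fun _ => Kc i) (fun y => sgm y i)); [apply cp_const|apply sig_cont]. Qed.
Lemma QQ_cont a : continuity_pt QQ a.
Proof. unfold QQ. apply (cp_sumR n (fun y i => rh i * Kc i * sgm y i)). intros i.
  apply (cp_mult (fun _ => rh i * Kc i) (fun y => sgm y i)); [apply cp_const|apply sig_cont]. Qed.
Lemma SS_cont a : continuity_pt SS a.
Proof. unfold SS. apply (cp_sumR (S n) (fun y i => sgm y i)). intros i. apply sig_cont. Qed.

Lemma zf_cont a : a * QQ a - PP a <> 0 -> continuity_pt zf a.
Proof.
  intros H. unfold zf.
  apply (cp_div (fun x => x * Ftot - Etot) (fun x => x * QQ x - PP x)); auto.
  - apply (cp_minus (fun x => x * Ftot) (fun _ => Etot)); [|apply cp_const].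
    apply (cp_mult (fun x => x) (fun _ => Ftot)); [apply cp_id|apply cp_const].
  - apply (cp_minus (fun x => x * QQ x) PP); [|apply PP_cont].
    apply (cp_mult (fun x => x) QQ); [apply cp_id|apply QQ_cont].
Qed.

Lemma Hf_cont a : a * QQ a - PP a <> 0 -> continuity_pt Hf a.
Proof.
  intros H. pose proof (zf_cont a H) as Hz.
  assert (He : continuity_pt ef a).
  { unfold ef. apply (cp_minus (fun _ => Etot) (fun x => zf x * PP x)); [apply cp_const|].
    apply (cp_mult zf PP); auto. apply PP_cont. }
  unfold Hf.
  apply (cp_plus (fun x => zf x * SS x) (fun x => max0 (ef x) * (zf x * (PP x + QQ x) - Stot))).
  - apply (cp_mult zf SS); auto. apply SS_cont.
  - apply (cp_mult (fun x => max0 (ef x)) (fun x => zf x * (PP x + QQ x) - Stot)).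
    + unfold max0. apply (cp_div (fun x => ef x + Rabs (ef x)) (fun _ => 2)); [|apply cp_const|lra].
      apply (cp_plus ef (fun x => Rabs (ef x))); auto. apply cp_abs; auto.
    + apply (cp_minus (fun x => zf x * (PP x + QQ x)) (fun _ => Stot)); [|apply cp_const].
      apply (cp_mult zf (fun x => PP x + QQ x)); auto.
      apply (cp_plus PP QQ); [apply PP_cont|apply QQ_cont].
Qed.

Lemma Bgen_ge1 : 1 <= Bgen.
Proof. unfold Bgen. assert (0 <= sumR n (fun i => / rh i)).
    { apply sumR_nonneg. intros. left. apply Rinv_0_lt_compat, rh_pos; auto. } lra. Qed.

Lemma zf_pos x : Bgen <= x -> Etot / Ftot < x -> 0 < zf x.
Proof.
  intros H1 H2. unfold zf. apply Rdiv_lt_0_compat; [|apply den_pos; auto].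
  apply Rmult_lt_compat_r with (r := Ftot) in H2; auto.
  unfold Rdiv in H2. rewrite Rmult_assoc, Rinv_l, Rmult_1_r in H2; lra.
Qed.

Lemma QQ_bound X : 1 <= X -> QQ X <= X ^ (n - 1) * QQ 1.
Proof.
  intros HX. unfold QQ. rewrite <- sumR_scal. apply sumR_le. intros i Hi.
  rewrite (sig_scale X i).
  assert (X ^ i <= X ^ (n - 1)) by (apply Rle_pow; auto; lia).
  assert (0 <= rh i * Kc i * sgm 1 i).
  { left. apply Rmult_lt_0_compat; [apply Rmult_lt_0_compat|]; [apply rh_pos; auto|apply Kc_pos; auto| apply sig_pos; [lra|lia]]. }
  nra.
Qed.

Lemma Hf_big X : 1 <= X -> Bgen <= X ->
  Etot * Stot * QQ 1 < (X * Ftot - Etot) * sgm 1 n -> 0 < Hf X.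
Proof.
  intros H1 H2 H3.
  assert (HX : 0 < X) by lra.
  pose proof (den_pos X H2) as Hd.
  pose proof (QQ_pos 1 ltac:(lra)) as HQ1.
  pose proof (sig_pos 1 n ltac:(lra) (le_n n)) as Hs1.
  assert (HN : 0 < X * Ftot - Etot).
  { destruct (Rlt_or_le 0 (X * Ftot - Etot)); auto.
    assert (0 < Etot * Stot * QQ 1) by (repeat apply Rmult_lt_0_compat; auto). nra. }
  assert (Hz : 0 < zf X) by (unfold zf; apply Rdiv_lt_0_compat; auto).
  assert (HSS : sgm 1 n * X ^ n <= SS X).
  { rewrite <- sig_scale. unfold SS. apply (sumR_term (S n) (sgm X) n); [lia|].
    intros; left; apply sig_pos; auto; lia. }
  assert (HQ : X * QQ X <= X ^ n * QQ 1).
  { pose proof (QQ_bound X H1).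
    assert (E : X ^ n = X * X ^ (n - 1)) by (replace n with (S (n - 1)) at 1 by lia; reflexivity).
    rewrite E, Rmult_assoc. apply Rmult_le_compat_l; lra. }
  assert (HP : 0 < PP X) by (apply PP_pos; auto).
  assert (Hxn : 0 < X ^ n) by (apply pow_lt; auto).
  assert (Hmain : Etot * Stot < zf X * SS X).
  { unfold zf. apply Rmult_lt_reg_l with (X * QQ X - PP X); auto.
    replace ((X * QQ X - PP X) * ((X * Ftot - Etot) / (X * QQ X - PP X) * SS X))
      with ((X * Ftot - Etot) * SS X) by (field; lra).
    assert ((X * Ftot - Etot) * (sgm 1 n * X ^ n) <= (X * Ftot - Etot) * SS X)
      by (apply Rmult_le_compat_l; lra).
    assert ((X * QQ X - PP X) * (Etot * Stot) < X ^ n * QQ 1 * (Etot * Stot)).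
    { apply Rmult_lt_compat_r; [apply Rmult_lt_0_compat; auto|lra]. }
    assert (X ^ n * QQ 1 * (Etot * Stot) < (X * Ftot - Etot) * (sgm 1 n * X ^ n)).
    { replace (X ^ n * QQ 1 * (Etot * Stot)) with (X ^ n * (Etot * Stot * QQ 1)) by ring.
      replace ((X * Ftot - Etot) * (sgm 1 n * X ^ n)) with (X ^ n * ((X * Ftot - Etot) * sgm 1 n)) by ring.
      apply Rmult_lt_compat_l; auto. }
    lra. }
  unfold Hf. destruct (Rlt_or_le 0 (ef X)) as [he|he].
  - rewrite max0_pos by auto.
    assert (ef X <= Etot) by (unfold ef; pose proof (Rmult_lt_0_compat _ _ Hz HP); lra).
    assert (0 <= zf X * (PP X + QQ X)) by (left; apply Rmult_lt_0_compat; auto; pose proof (QQ_pos X HX); lra).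
    assert (ef X * Stot <= Etot * Stot) by (apply Rmult_le_compat_r; lra).
    nra.
  - rewrite max0_nonpos by auto. rewrite Rmult_0_l.
    assert (0 < Etot * Stot) by (apply Rmult_lt_0_compat; auto). lra.
Qed.

Lemma generic_ms xl xw : Bgen < xl -> Etot / Ftot < xl -> xl < xw ->
  0 < Hf xl -> Hf xw < 0 -> multistationary n kon koff kcat lon loff lcat Stot Etot Ftot.
Proof.
  intros H1 H2 H3 H4 H5.
  pose proof Bgen_ge1 as HB.
  pose proof (QQ_pos 1 ltac:(lra)) as HQ1.
  pose proof (sig_pos 1 n ltac:(lra) (le_n n)) as Hs1.
  set (X := 1 + Bgen + xw + (Etot + Etot * Stot * QQ 1 / sgm 1 n) / Ftot).
  assert (HQs : 0 <= Etot * Stot * QQ 1 / sgm 1 n).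
  { left. apply Rdiv_lt_0_compat; auto. repeat apply Rmult_lt_0_compat; auto. }
  assert (HXF : X * Ftot - Etot > Etot * Stot * QQ 1 / sgm 1 n).
  { unfold X. assert (0 < (1 + Bgen + xw) * Ftot).
    { apply Rmult_lt_0_compat; auto. assert (0 < xl) by lra. lra. }
    replace ((1 + Bgen + xw + (Etot + Etot * Stot * QQ 1 / sgm 1 n) / Ftot) * Ftot - Etot)
      with ((1 + Bgen + xw) * Ftot + Etot * Stot * QQ 1 / sgm 1 n) by (field; lra). lra. }
  assert (HXw : xw < X) by (unfold X; assert (0 <= (Etot + Etot * Stot * QQ 1 / sgm 1 n) / Ftot) by
      (unfold Rdiv; apply Rmult_le_pos; [lra|left; apply Rinv_0_lt_compat; lra]); lra).
  assert (HHX : 0 < Hf X).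
  { apply Hf_big; try lra.
    apply (Rmult_lt_compat_r (sgm 1 n)) in HXF; auto.
    replace (Etot * Stot * QQ 1 / sgm 1 n * sgm 1 n) with (Etot * Stot * QQ 1) in HXF by (field; lra).
    exact HXF. }
  assert (Hc : forall a, xl <= a <= X -> continuity_pt Hf a).
  { intros a Ha. apply Hf_cont. apply Rgt_not_eq. apply den_pos. lra. }
  destruct (IVT_interv Hf xw X) as [r2 [Hr2 Er2]]; auto.
  { intros a Ha. apply Hc. lra. }
  destruct (IVT_interv (fun x => - Hf x) xl xw) as [r1 [Hr1 Er1]]; auto; try lra.
  { intros a Ha. exact (continuity_pt_opp Hf a (Hc a ltac:(lra))). }
  assert (Er1' : Hf r1 = 0) by lra.
  assert (r1 <> xw) by (intro; subst; lra).
  assert (r2 <> xw) by (intro; subst; lra).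
  assert (Hp1 : 0 < r1) by lra. assert (Hp2 : 0 < r2) by lra.
  assert (Hz1 : 0 < zf r1) by (apply zf_pos; lra).
  assert (Hz2 : 0 < zf r2) by (apply zf_pos; lra).
  assert (Hd1 : 0 < r1 * QQ r1 - PP r1) by (apply den_pos; lra).
  assert (Hd2 : 0 < r2 * QQ r2 - PP r2) by (apply den_pos; lra).
  pose proof (ef_pos r1 Hp1 Hz1 Er1') as He1.
  pose proof (ef_pos r2 Hp2 Hz2 Er2) as He2.
  unfold multistationary.
  do 10 eexists. split; [apply (steady r1); auto|]. split; [apply (steady r2); auto|].
  unfold distinct_points. right; right.
  destruct (Req_dec (ef r1) (ef r2)) as [E|E]; [right|left; auto].
  intro F. rewrite E in F. unfold Rdiv in F.
  apply Rmult_eq_reg_l in F; [|lra].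
  assert (r1 = r2).
  { rewrite <- (Rinv_inv r1), <- (Rinv_inv r2), F. reflexivity. }
  lra.
Qed.

End Generic.


Lemma div_le2 a a' b b' : 0 <= a <= a' -> 0 < b' <= b -> a / b <= a' / b'.
Proof.
  intros Ha Hb. unfold Rdiv. apply Rmult_le_compat; try lra.
  - left; apply Rinv_0_lt_compat; lra.
  - apply Rinv_le_contravar; lra.
Qed.

Section Est.
Variables (Ftot Etot Stot c r w : R).
Definition zlo eta := (Ftot - Etot * eta / w) / (r * c * w + eta).
Definition zhi eta := Ftot / (r * c * w - (c * w + eta) * eta / w).
Definition elo eta := Etot - zhi eta * (c * w + eta).
Definition ehi eta := Etot - zlo eta * (c * w).
Definition RU eta := zhi eta * (1 + eta) / elo eta + zhi eta * ((1 + r) * c * w + eta) - Stot.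
Definition RL eta := zlo eta / ehi eta + zlo eta * ((1 + r) * c * w) - Stot.

Lemma est eta d p q s : 0 < c -> 0 < r -> 0 < w -> 0 < Ftot -> 0 < Etot ->
  0 < d <= eta -> 0 <= p -> 0 <= q -> p + q <= eta -> 0 <= s <= eta ->
  0 < Ftot - Etot * eta / w -> 0 < r * c * w - (c * w + eta) * eta / w -> 0 < elo eta ->
  let x := w / d in
  let z := (x * Ftot - Etot) / (x * (r * c * w + q) - (c * w + p)) in
  let e := Etot - z * (c * w + p) in
  0 < x * (r * c * w + q) - (c * w + p) /\ 0 < z /\ elo eta <= e /\
  RL eta <= z * (1 + s) / e + z * ((c * w + p) + (r * c * w + q)) - Stot <= RU eta.
Proof.
  intros Hc Hr Hw HF HE Hd Hp Hq Hpq Hs C1 C2 C3 x z e.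
  assert (Hcw : 0 < c * w) by (apply Rmult_lt_0_compat; lra).
  set (N := Ftot - Etot * d / w).
  set (Dn := (r * c * w + q) - (c * w + p) * d / w).
  assert (Hdw : 0 <= d / w) by (unfold Rdiv; apply Rmult_le_pos; [lra|left; apply Rinv_0_lt_compat; lra]).
  assert (Hew : Etot * d / w <= Etot * eta / w).
  { unfold Rdiv. rewrite !Rmult_assoc. apply Rmult_le_compat_l; [lra|].
    apply Rmult_le_compat_r; [left; apply Rinv_0_lt_compat; lra|lra]. }
  assert (HN1 : Ftot - Etot * eta / w <= N) by (unfold N; lra).
  assert (HN2 : N <= Ftot).
  { unfold N. assert (0 <= Etot * d / w) by (unfold Rdiv; rewrite Rmult_assoc; apply Rmult_le_pos; lra). lra. }
  assert (HP1 : (c * w + p) * d / w <= (c * w + eta) * eta / w).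
  { unfold Rdiv. rewrite !Rmult_assoc. apply Rmult_le_compat; try lra.
    apply Rmult_le_compat_r; [left; apply Rinv_0_lt_compat; lra|lra]. }
  assert (HP2 : 0 <= (c * w + p) * d / w).
  { unfold Rdiv. rewrite Rmult_assoc. apply Rmult_le_pos; [|lra].
    assert (0 < c * w) by (apply Rmult_lt_0_compat; lra). lra. }
  assert (HD1 : r * c * w - (c * w + eta) * eta / w <= Dn) by (unfold Dn; lra).
  assert (HD2 : Dn <= r * c * w + eta) by (unfold Dn; lra).
  assert (Hx : 0 < x) by (unfold x; apply Rdiv_lt_0_compat; lra).
  assert (Hden : x * (r * c * w + q) - (c * w + p) = x * Dn).
  { unfold Dn, x. field. lra. }
  assert (Hz : z = N / Dn).
  { unfold z. rewrite Hden. unfold N, x. field. split; [lra|split; lra]. }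
  assert (Hzlo : zlo eta <= z).
  { rewrite Hz. unfold zlo. apply div_le2; lra. }
  assert (Hzhi : z <= zhi eta).
  { rewrite Hz. unfold zhi. apply div_le2; lra. }
  assert (Hz0 : 0 < z) by (rewrite Hz; apply Rdiv_lt_0_compat; lra).
  assert (Hzl0 : 0 < zlo eta) by (unfold zlo; apply Rdiv_lt_0_compat; lra).
  assert (He1 : elo eta <= e).
  { unfold elo, e. assert (z * (c * w + p) <= zhi eta * (c * w + eta)) by (apply Rmult_le_compat; lra). lra. }
  assert (He2 : e <= ehi eta).
  { unfold ehi, e. assert (zlo eta * (c * w) <= z * (c * w + p)) by (apply Rmult_le_compat; lra). lra. }
  split; [rewrite Hden; apply Rmult_lt_0_compat; lra|].
  split; [auto|]. split; [auto|].
  split.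
  - unfold RL.
    assert (zlo eta / ehi eta <= z * (1 + s) / e).
    { apply div_le2; [split; [lra|] | lra]. replace (zlo eta) with (zlo eta * 1) by ring.
      apply Rmult_le_compat; lra. }
    assert (zlo eta * ((1 + r) * c * w) <= z * (c * w + p + (r * c * w + q))).
    { assert (0 < r * c * w) by (repeat apply Rmult_lt_0_compat; lra).
      apply Rmult_le_compat; lra. }
    lra.
  - unfold RU.
    assert (z * (1 + s) / e <= zhi eta * (1 + eta) / elo eta).
    { apply div_le2; [split|]; try lra. apply Rmult_le_pos; lra. apply Rmult_le_compat; lra. }
    assert (z * (c * w + p + (r * c * w + q)) <= zhi eta * ((1 + r) * c * w + eta)).
    { assert (0 < r * c * w) by (repeat apply Rmult_lt_0_compat; lra).
      apply Rmult_le_compat; lra. }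
    lra.
Qed.
End Est.

Lemma ev_and (P Q : R -> Prop) :
  (exists eta, 0 < eta /\ forall t, 0 <= t <= eta -> P t) ->
  (exists eta, 0 < eta /\ forall t, 0 <= t <= eta -> Q t) ->
  (exists eta, 0 < eta /\ forall t, 0 <= t <= eta -> P t /\ Q t).
Proof.
  intros [a [Ha HP]] [b [Hb HQ]]. exists (Rmin a b). split.
  - apply Rmin_pos; auto.
  - intros t Ht. pose proof (Rmin_l a b). pose proof (Rmin_r a b).
    split; [apply HP|apply HQ]; lra.
Qed.

Section Choose.
Variables (Ftot Etot Stot c r : R).
Hypothesis Hc : 0 < c.
Hypothesis Hr : 0 < r.
Hypothesis HF : 0 < Ftot.
Hypothesis HE : 0 < Etot.
Hypothesis HrE : Ftot / Etot < r.
Hypothesis HrS : Ftot / (Stot - Ftot) < r.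
Hypothesis HSF : Ftot < Stot.

Definition einf := Etot - Ftot / r.
Definition Dd := Stot - Ftot - Ftot / r.
Definition AA := Ftot / (r * c * einf).
Definition wlo := AA / (2 * Dd).
Definition wW := 2 * AA / Dd.

Lemma einf_pos : 0 < einf.
Proof.
  unfold einf. apply Rmult_lt_compat_r with (r := Etot) in HrE; auto.
  unfold Rdiv in HrE. rewrite Rmult_assoc, Rinv_l, Rmult_1_r in HrE by lra.
  assert (Ftot / r < Etot).
  { apply Rmult_lt_reg_r with r; auto. unfold Rdiv. rewrite Rmult_assoc, Rinv_l by lra. lra. }
  lra.
Qed.

Lemma Dd_pos : 0 < Dd.
Proof.
  unfold Dd. assert (HS : 0 < Stot - Ftot) by lra.
  apply Rmult_lt_compat_r with (r := Stot - Ftot) in HrS; auto.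
  unfold Rdiv in HrS. rewrite Rmult_assoc, Rinv_l, Rmult_1_r in HrS by lra.
  assert (Ftot / r < Stot - Ftot).
  { apply Rmult_lt_reg_r with r; auto. unfold Rdiv. rewrite Rmult_assoc, Rinv_l by lra. lra. }
  lra.
Qed.

Lemma AA_pos : 0 < AA.
Proof. unfold AA. pose proof einf_pos. apply Rdiv_lt_0_compat; auto.
  repeat apply Rmult_lt_0_compat; auto. Qed.
Lemma wlo_pos : 0 < wlo.
Proof. unfold wlo. pose proof AA_pos. pose proof Dd_pos. apply Rdiv_lt_0_compat; lra. Qed.
Lemma wW_pos : 0 < wW.
Proof. unfold wW. pose proof AA_pos. pose proof Dd_pos. apply Rdiv_lt_0_compat; lra. Qed.
Lemma wlo_lt_wW : wlo < wW.
Proof. unfold wlo, wW. pose proof AA_pos. pose proof Dd_pos.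
  apply Rminus_gt_0_lt. replace (2 * AA / Dd - AA / (2 * Dd)) with (3 * AA / (2 * Dd)) by (field; lra).
  apply Rdiv_lt_0_compat; lra. Qed.

Definition Good w eta := 0 < Ftot - Etot * eta / w /\ 0 < r * c * w - (c * w + eta) * eta / w /\
  0 < elo Ftot Etot c r w eta.

Lemma zhi_cont w : 0 < w -> continuity_pt (zhi Ftot c r w) 0.
Proof.
  intros Hw. unfold zhi.
  apply (cp_div (fun _ => Ftot) (fun eta => r * c * w - (c * w + eta) * eta / w)); [apply cp_const| |].
  - apply (cp_minus (fun _ => r * c * w) (fun eta => (c * w + eta) * eta / w)); [apply cp_const|].
    apply (cp_div (fun eta => (c * w + eta) * eta) (fun _ => w)); [|apply cp_const|lra].
    apply (cp_mult (fun eta => c * w + eta) (fun eta => eta)); [|apply cp_id].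
    apply (cp_plus (fun _ => c * w) (fun eta => eta)); [apply cp_const|apply cp_id].
  - assert (0 < r * c * w) by (repeat apply Rmult_lt_0_compat; auto).
    replace (r * c * w - (c * w + 0) * 0 / w) with (r * c * w) by (field; lra). lra.
Qed.

Lemma zlo_cont w : 0 < w -> continuity_pt (zlo Ftot Etot c r w) 0.
Proof.
  intros Hw. unfold zlo.
  apply (cp_div (fun eta => Ftot - Etot * eta / w) (fun eta => r * c * w + eta)).
  - apply (cp_minus (fun _ => Ftot) (fun eta => Etot * eta / w)); [apply cp_const|].
    apply (cp_div (fun eta => Etot * eta) (fun _ => w)); [|apply cp_const|lra].
    apply (cp_mult (fun _ => Etot) (fun eta => eta)); [apply cp_const|apply cp_id].
  - apply (cp_plus (fun _ => r * c * w) (fun eta => eta)); [apply cp_const|apply cp_id].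
  - assert (0 < r * c * w) by (repeat apply Rmult_lt_0_compat; auto). lra.
Qed.

Lemma zhi0 w : 0 < w -> zhi Ftot c r w 0 = Ftot / (r * c * w).
Proof. intros. unfold zhi. f_equal. field. lra. Qed.
Lemma zlo0 w : 0 < w -> zlo Ftot Etot c r w 0 = Ftot / (r * c * w).
Proof. intros. unfold zlo. field. repeat split; lra. Qed.
Lemma elo0 w : 0 < w -> elo Ftot Etot c r w 0 = einf.
Proof. intros. unfold elo. rewrite zhi0 by auto. unfold einf. field. repeat split; lra. Qed.
Lemma ehi0 w : 0 < w -> ehi Ftot Etot c r w 0 = einf.
Proof. intros. unfold ehi. rewrite zlo0 by auto. unfold einf. field. repeat split; lra. Qed.

Lemma elo_cont w : 0 < w -> continuity_pt (elo Ftot Etot c r w) 0.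
Proof.
  intros Hw. unfold elo.
  apply (cp_minus (fun _ => Etot) (fun eta => zhi Ftot c r w eta * (c * w + eta))); [apply cp_const|].
  apply (cp_mult (zhi Ftot c r w) (fun eta => c * w + eta)); [apply zhi_cont; auto|].
  apply (cp_plus (fun _ => c * w) (fun eta => eta)); [apply cp_const|apply cp_id].
Qed.
Lemma ehi_cont w : 0 < w -> continuity_pt (ehi Ftot Etot c r w) 0.
Proof.
  intros Hw. unfold ehi.
  apply (cp_minus (fun _ => Etot) (fun eta => zlo Ftot Etot c r w eta * (c * w))); [apply cp_const|].
  apply (cp_mult (zlo Ftot Etot c r w) (fun eta => c * w)); [apply zlo_cont; auto|apply cp_const].
Qed.

Lemma RU_cont w : 0 < w -> continuity_pt (fun eta => 0 - RU Ftot Etot Stot c r w eta) 0.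
Proof.
  intros Hw. unfold RU.
  apply (cp_minus (fun _ => 0) (fun eta => zhi Ftot c r w eta * (1 + eta) / elo Ftot Etot c r w eta +
     zhi Ftot c r w eta * ((1 + r) * c * w + eta) - Stot)) ; [apply cp_const|].
  apply (cp_minus (fun eta => zhi Ftot c r w eta * (1 + eta) / elo Ftot Etot c r w eta +
     zhi Ftot c r w eta * ((1 + r) * c * w + eta)) (fun _ => Stot)); [|apply cp_const].
  apply (cp_plus (fun eta => zhi Ftot c r w eta * (1 + eta) / elo Ftot Etot c r w eta)
     (fun eta => zhi Ftot c r w eta * ((1 + r) * c * w + eta))).
  - apply (cp_div (fun eta => zhi Ftot c r w eta * (1 + eta)) (elo Ftot Etot c r w)).
    + apply (cp_mult (zhi Ftot c r w) (fun eta => 1 + eta)); [apply zhi_cont; auto|].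
      apply (cp_plus (fun _ => 1) (fun eta => eta)); [apply cp_const|apply cp_id].
    + apply elo_cont; auto.
    + rewrite elo0 by auto. pose proof einf_pos. lra.
  - apply (cp_mult (zhi Ftot c r w) (fun eta => (1 + r) * c * w + eta)); [apply zhi_cont; auto|].
    apply (cp_plus (fun _ => (1 + r) * c * w) (fun eta => eta)); [apply cp_const|apply cp_id].
Qed.

Lemma RL_cont w : 0 < w -> continuity_pt (RL Ftot Etot Stot c r w) 0.
Proof.
  intros Hw. unfold RL.
  apply (cp_minus (fun eta => zlo Ftot Etot c r w eta / ehi Ftot Etot c r w eta +
     zlo Ftot Etot c r w eta * ((1 + r) * c * w)) (fun _ => Stot)); [|apply cp_const].
  apply (cp_plus (fun eta => zlo Ftot Etot c r w eta / ehi Ftot Etot c r w eta)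
     (fun eta => zlo Ftot Etot c r w eta * ((1 + r) * c * w))).
  - apply (cp_div (zlo Ftot Etot c r w) (ehi Ftot Etot c r w)).
    + apply zlo_cont; auto.
    + apply ehi_cont; auto.
    + rewrite ehi0 by auto. pose proof einf_pos. lra.
  - apply (cp_mult (zlo Ftot Etot c r w) (fun _ => (1 + r) * c * w)); [apply zlo_cont; auto|apply cp_const].
Qed.

Lemma RU0 w : 0 < w -> RU Ftot Etot Stot c r w 0 = AA / w - Dd.
Proof.
  intros Hw. unfold RU. rewrite zhi0, elo0 by auto. unfold AA, Dd.
  pose proof einf_pos. field. repeat split; lra.
Qed.
Lemma RL0 w : 0 < w -> RL Ftot Etot Stot c r w 0 = AA / w - Dd.
Proof.
  intros Hw. unfold RL. rewrite zlo0, ehi0 by auto. unfold AA, Dd.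
  pose proof einf_pos. field. repeat split; lra.
Qed.

Lemma Good_ev w : 0 < w -> exists eta, 0 < eta /\ forall t, 0 <= t <= eta -> Good w t.
Proof.
  intros Hw. unfold Good.
  apply ev_and; [|apply ev_and].
  - apply (eventually_pos (fun eta => Ftot - Etot * eta / w)).
    + apply (cp_minus (fun _ => Ftot) (fun eta => Etot * eta / w)); [apply cp_const|].
      apply (cp_div (fun eta => Etot * eta) (fun _ => w)); [|apply cp_const|lra].
      apply (cp_mult (fun _ => Etot) (fun eta => eta)); [apply cp_const|apply cp_id].
    + replace (Ftot - Etot * 0 / w) with Ftot by (field; lra). auto.
  - apply (eventually_pos (fun eta => r * c * w - (c * w + eta) * eta / w)).
    + apply (cp_minus (fun _ => r * c * w) (fun eta => (c * w + eta) * eta / w)); [apply cp_const|].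
      apply (cp_div (fun eta => (c * w + eta) * eta) (fun _ => w)); [|apply cp_const|lra].
      apply (cp_mult (fun eta => c * w + eta) (fun eta => eta)); [|apply cp_id].
      apply (cp_plus (fun _ => c * w) (fun eta => eta)); [apply cp_const|apply cp_id].
    + assert (0 < r * c * w) by (repeat apply Rmult_lt_0_compat; auto).
      replace (r * c * w - (c * w + 0) * 0 / w) with (r * c * w) by (field; lra). auto.
  - apply (eventually_pos (elo Ftot Etot c r w)); [apply elo_cont; auto|].
    rewrite elo0 by auto. apply einf_pos.
Qed.

Lemma choose_eta : exists eta, 0 < eta /\ Good wlo eta /\ Good wW eta /\
  0 < RL Ftot Etot Stot c r wlo eta /\ RU Ftot Etot Stot c r wW eta < 0.
Proof.
  pose proof wlo_pos. pose proof wW_pos. pose proof Dd_pos. pose proof AA_pos.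
  assert (HH : exists eta, 0 < eta /\ forall t, 0 <= t <= eta ->
    (Good wlo t /\ Good wW t) /\ (0 < RL Ftot Etot Stot c r wlo t /\ 0 < 0 - RU Ftot Etot Stot c r wW t)).
  { apply ev_and; (apply ev_and; [|]).
    - apply Good_ev; auto.
    - apply Good_ev; auto.
    - apply eventually_pos; [apply RL_cont; auto|]. rewrite RL0 by auto. unfold wlo.
      replace (AA / (AA / (2 * Dd)) - Dd) with Dd by (field; lra). auto.
    - apply (eventually_pos (fun eta => 0 - RU Ftot Etot Stot c r wW eta)); [apply RU_cont; auto|].
      rewrite RU0 by auto. unfold wW.
      replace (0 - (AA / (2 * AA / Dd) - Dd)) with (Dd / 2) by (field; lra). lra. }
  destruct HH as [eta [Heta HHH]]. exists eta. split; auto.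
  destruct (HHH eta ltac:(lra)) as [[A B] [C D]]. repeat split; auto; try apply A; try apply B. lra.
Qed.

End Choose.


Section Part3.
Variables (n : nat) (kon koff kcat lon loff lcat : nat -> R) (Stot Etot Ftot : R).
Hypothesis Hn2 : (2 <= n)%nat.
Hypothesis Hkon : pos_rates n kon.
Hypothesis Hkoff : pos_rates n koff.
Hypothesis Hkcat : pos_rates n kcat.
Hypothesis Hlon : pos_rates n lon.
Hypothesis Hloff : pos_rates n loff.
Hypothesis Hlcat : pos_rates n lcat.
Hypothesis HS : 0 < Stot.
Hypothesis HE : 0 < Etot.
Hypothesis HF : 0 < Ftot.
Hypothesis HSF : Ftot < Stot.

Definition sig1 i := sgm kon koff kcat lon loff lcat 1 i.
Definition r0 := rh kcat lcat 1.
Definition c0 := Kc kon koff kcat 1 * sig1 1.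
Hypothesis Hr0E : Ftot / Etot < r0.
Hypothesis Hr0S : Ftot / (Stot - Ftot) < r0.

Definition wl := wlo Ftot Etot Stot c0 r0.
Definition ww := wW Ftot Etot Stot c0 r0.

Variable eta : R.
Hypothesis Heta : 0 < eta.
Hypothesis Hgl : Good Ftot Etot c0 r0 wl eta.
Hypothesis Hgw : Good Ftot Etot c0 r0 ww eta.
Hypothesis HRL : 0 < RL Ftot Etot Stot c0 r0 wl eta.
Hypothesis HRU : RU Ftot Etot Stot c0 r0 ww eta < 0.

Definition C1 := sumR n (fun i => Kc kon koff kcat i * sig1 i * (1 + rh kcat lcat i) * (1 + ww) ^ i).
Definition C2 := sumR (S n) (fun i => sig1 i * (1 + ww) ^ i).
Definition m0 := eta / (1 + C1 + C2).
Definition Bg := Bgen n kcat lcat.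
Definition dmax := Rmin eta (wl / (Bg + Etot / Ftot + 1)).
Definition MM (k : nat) : R :=
  if Nat.eqb k (n + 2) then dmax else if Nat.leb (n + 1) k then m0 else 1.

Lemma Kc_pos' i : (i < n)%nat -> 0 < Kc kon koff kcat i.
Proof. intros H. unfold Kc. specialize (Hkon i H). specialize (Hkoff i H). specialize (Hkcat i H).
  apply Rdiv_lt_0_compat; lra. Qed.
Lemma rh_pos' i : (i < n)%nat -> 0 < rh kcat lcat i.
Proof. intros H. unfold rh. specialize (Hkcat i H). specialize (Hlcat i H).
  apply Rdiv_lt_0_compat; lra. Qed.
Lemma sig1_pos i : (i <= n)%nat -> 0 < sig1 i.
Proof. intros. unfold sig1. eapply (sig_pos n); eauto; try lia; lra. Qed.

Lemma r0_pos : 0 < r0.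
Proof. unfold r0. apply rh_pos'. lia. Qed.
Lemma c0_pos : 0 < c0.
Proof. unfold c0. apply Rmult_lt_0_compat; [apply Kc_pos'; lia|apply sig1_pos; lia]. Qed.

Lemma C1_nonneg : 0 <= C1.
Proof. unfold C1. apply sumR_nonneg. intros i Hi.
  pose proof (Kc_pos' i Hi). pose proof (sig1_pos i ltac:(lia)). pose proof (rh_pos' i Hi).
  assert (0 < (1 + ww) ^ i) by (apply pow_lt; pose proof (wW_pos Ftot Etot Stot c0 r0 c0_pos r0_pos HF HE Hr0E Hr0S HSF); unfold ww; lra).
  left. apply Rmult_lt_0_compat; [apply Rmult_lt_0_compat; [apply Rmult_lt_0_compat|]|]; lra. Qed.
Lemma C2_nonneg : 0 <= C2.
Proof. unfold C2. apply sumR_nonneg. intros i Hi.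
  pose proof (sig1_pos i ltac:(lia)).
  assert (0 < (1 + ww) ^ i) by (apply pow_lt; pose proof (wW_pos Ftot Etot Stot c0 r0 c0_pos r0_pos HF HE Hr0E Hr0S HSF); unfold ww; lra).
  left. apply Rmult_lt_0_compat; lra. Qed.
Lemma m0_pos : 0 < m0.
Proof. unfold m0. pose proof C1_nonneg. pose proof C2_nonneg. apply Rdiv_lt_0_compat; lra. Qed.
Lemma Bg_ge1 : 1 <= Bg.
Proof. unfold Bg. eapply (Bgen_ge1 n); eauto. Qed.
Lemma wl_pos : 0 < wl.
Proof. unfold wl. apply wlo_pos; auto. apply c0_pos. apply r0_pos. Qed.
Lemma ww_pos : 0 < ww.
Proof. unfold ww. apply wW_pos; auto. apply c0_pos. apply r0_pos. Qed.
Lemma dmax_pos : 0 < dmax.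
Proof. unfold dmax. apply Rmin_pos; auto. pose proof Bg_ge1. pose proof wl_pos.
  assert (0 < Etot / Ftot) by (apply Rdiv_lt_0_compat; auto). apply Rdiv_lt_0_compat; lra. Qed.

Lemma MM_pos k : 0 < MM k.
Proof. unfold MM. destruct (Nat.eqb k (n+2)); [apply dmax_pos|]. destruct (Nat.leb (n+1) k); [apply m0_pos|lra]. Qed.

Lemma MM_m0 k : (n + 1 <= k)%nat -> k <> (n + 2)%nat -> MM k = m0.
Proof. intros H1 H2. unfold MM. destruct (Nat.eqb_spec k (n+2)); [lia|].
  destruct (Nat.leb_spec (n+1) k); [auto|lia]. Qed.
Lemma MM_d : MM (n + 2) = dmax.
Proof. unfold MM. rewrite Nat.eqb_refl. auto. Qed.


Lemma pow_div a b i : b <> 0 -> (a / b) ^ i = a ^ i / b ^ i.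
Proof. intros Hb. induction i; simpl; [field|]. rewrite IHi. field. split; auto. apply pow_nonzero; auto. Qed.

Lemma bound_lemma a m K u v : 0 <= a < m -> 0 <= K -> 0 <= u <= v -> a * K * u <= m * (K * v).
Proof. intros. rewrite Rmult_assoc. apply Rmult_le_compat; try lra.
  apply Rmult_le_pos; lra. apply Rmult_le_compat_l; lra. Qed.

Variable g : nat -> R.
Hypothesis Hgp : forall i, (1 <= i <= 2 * n)%nat -> 0 < g i.
Hypothesis HgM : forall i, (1 <= i <= 2 * n)%nat -> g i < MM i.
Hypothesis Hg2 : forall i, (1 <= i <= n)%nat -> g i / g (n + 2)%nat ^ i < MM (2 * n + i)%nat.
Hypothesis Hg3 : forall i, (3 <= i <= n)%nat ->
  g (n + i)%nat / g (n + 2)%nat ^ (i - 1) < MM (3 * n - 2 + i)%nat.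

Definition konS := fun i => (if Nat.eqb i 0 then g (n + 1)%nat else g (n + 1 + i)%nat / g i) * kon i.
Definition lonS := fun i => g (n + 1 + i)%nat / g (i + 1)%nat * lon i.
Definition gam i := if Nat.eqb i 0 then 1 else g i.

Lemma konS_pos : pos_rates n konS.
Proof. intros i Hi. unfold konS. pose proof (Hkon i Hi).
  destruct (Nat.eqb_spec i 0).
  - apply Rmult_lt_0_compat; auto. apply Hgp; lia.
  - apply Rmult_lt_0_compat; auto. apply Rdiv_lt_0_compat; apply Hgp; lia. Qed.
Lemma lonS_pos : pos_rates n lonS.
Proof. intros i Hi. unfold lonS. pose proof (Hlon i Hi).
  apply Rmult_lt_0_compat; auto. apply Rdiv_lt_0_compat; apply Hgp; lia. Qed.

Lemma gam_pos i : (i <= n)%nat -> 0 < gam i.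
Proof. intros. unfold gam. destruct (Nat.eqb_spec i 0); [lra|apply Hgp; lia]. Qed.

Lemma aaS_eq i : (i < n)%nat ->
  aa konS koff kcat lonS loff lcat i * gam i = aa kon koff kcat lon loff lcat i * gam (S i).
Proof.
  intros Hi. unfold aa, Kc, Lc, konS, lonS, gam.
  pose proof (Hkon i Hi). pose proof (Hkoff i Hi). pose proof (Hkcat i Hi).
  pose proof (Hlon i Hi). pose proof (Hloff i Hi). pose proof (Hlcat i Hi).
  assert (0 < g (n + 1 + i)%nat) by (apply Hgp; lia).
  assert (0 < g (i + 1)%nat) by (apply Hgp; lia).
  simpl Nat.eqb. replace (i + 1)%nat with (S i) in * by lia.
  destruct (Nat.eqb_spec i 0) as [->|Hne].
  - replace (n + 1 + 0)%nat with (n + 1)%nat in * by lia. field. repeat split; lra.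
  - assert (0 < g i) by (apply Hgp; lia). field. repeat split; lra.
Qed.

Lemma sigS_eq x i : (i <= n)%nat ->
  sgm konS koff kcat lonS loff lcat x i = sig1 i * gam i * x ^ i.
Proof.
  induction i; intros Hi.
  - simpl. unfold sig1, gam. simpl. ring.
  - simpl sgm. rewrite IHi by lia. unfold sig1. simpl sgm.
    replace (sgm kon koff kcat lon loff lcat 1 i * gam i * x ^ i * aa konS koff kcat lonS loff lcat i * x)
      with (sgm kon koff kcat lon loff lcat 1 i * (aa konS koff kcat lonS loff lcat i * gam i) * x ^ S i)
      by (simpl; ring).
    rewrite aaS_eq by lia. simpl. ring.
Qed.

Definition dl := g (n + 2)%nat.
Lemma dl_pos : 0 < dl.
Proof. unfold dl. apply Hgp. lia. Qed.
Lemma dl_bounds : dl <= eta /\ dl < wl / (Bg + Etot / Ftot + 1).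
Proof.
  pose proof (HgM (n + 2)%nat ltac:(lia)). rewrite MM_d in H. unfold dl.
  pose proof (Rmin_l eta (wl / (Bg + Etot / Ftot + 1))). pose proof (Rmin_r eta (wl / (Bg + Etot / Ftot + 1))).
  unfold dmax in H. split; lra.
Qed.

Section AtW.
Variable w : R.
Hypothesis Hw : 0 < w <= ww.
Definition xw := w / dl.
Definition TT i := Kc konS koff kcat i * sgm konS koff kcat lonS loff lcat xw i.

Lemma TT1 : TT 1 = c0 * w.
Proof.
  unfold TT. rewrite sigS_eq by lia. unfold Kc, konS, c0, Kc, gam, xw, dl. simpl Nat.eqb.
  replace (n + 1 + 1)%nat with (n + 2)%nat by lia.
  assert (0 < g 1%nat) by (apply Hgp; lia). assert (0 < g (n + 2)%nat) by (apply Hgp; lia).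
  pose proof (Hkoff 1%nat ltac:(lia)). pose proof (Hkcat 1%nat ltac:(lia)).
  field. repeat split; lra.
Qed.

Lemma TT_bound i : (i < n)%nat -> i <> 1%nat ->
  0 <= TT i <= m0 * (Kc kon koff kcat i * sig1 i * (1 + ww) ^ i).
Proof.
  intros Hi Hi1. pose proof dl_pos as Hd.
  pose proof (Kc_pos' i Hi) as HK. pose proof (sig1_pos i ltac:(lia)) as Hs.
  assert (Hu : 0 <= w ^ i <= (1 + ww) ^ i).
  { split; [apply pow_le; lra|apply pow_incr; lra]. }
  destruct (Nat.eqb_spec i 0) as [->|Hne].
  - assert (0 < g (n + 1)%nat) by (apply Hgp; lia).
    assert (g (n + 1)%nat < m0) by (rewrite <- (MM_m0 (n+1)); [apply HgM|..]; lia).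
    pose proof (Hkoff 0%nat Hi). pose proof (Hkcat 0%nat Hi).
    assert (E : TT 0 = g (n + 1)%nat * Kc kon koff kcat 0 * 1).
    { unfold TT. rewrite sigS_eq by lia. unfold Kc, konS, gam, sig1. simpl. field. lra. }
    rewrite E.
    replace (Kc kon koff kcat 0 * sig1 0 * (1 + ww) ^ 0) with (Kc kon koff kcat 0 * 1) by (unfold sig1; simpl; ring).
    split; [|apply bound_lemma; lra].
    apply Rmult_le_pos; [|lra]. apply Rmult_le_pos; lra.
  - assert (0 < g i) by (apply Hgp; lia).
    assert (0 < g (n + 1 + i)%nat) by (apply Hgp; lia).
    pose proof (Hg3 (i + 1)%nat ltac:(lia)) as H3.
    replace (n + (i + 1))%nat with (n + 1 + i)%nat in H3 by lia.
    replace (i + 1 - 1)%nat with i in H3 by lia.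
    rewrite MM_m0 in H3 by lia. fold dl in H3.
    pose proof (Hkoff i Hi). pose proof (Hkcat i Hi).
    assert (0 < dl ^ i) by (apply pow_lt; auto).
    assert (E : TT i = g (n + 1 + i)%nat / dl ^ i * (Kc kon koff kcat i * sig1 i) * w ^ i).
    { unfold TT. rewrite sigS_eq by lia. unfold Kc, konS, gam, xw.
      destruct (Nat.eqb_spec i 0); [lia|]. rewrite pow_div by lra.
      field; repeat split; lra. }
    rewrite E.
    assert (0 <= g (n + 1 + i)%nat / dl ^ i) by (left; apply Rdiv_lt_0_compat; auto).
    split.
    + apply Rmult_le_pos; [apply Rmult_le_pos|]; try lra. left; apply Rmult_lt_0_compat; auto.
    + apply bound_lemma; try lra. left; apply Rmult_lt_0_compat; auto.
Qed.

Lemma sigS_bound i : (1 <= i <= n)%nat ->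
  0 <= sgm konS koff kcat lonS loff lcat xw i <= m0 * (sig1 i * (1 + ww) ^ i).
Proof.
  intros Hi. pose proof dl_pos as Hd. pose proof (sig1_pos i ltac:(lia)) as Hs.
  assert (Hu : 0 <= w ^ i <= (1 + ww) ^ i).
  { split; [apply pow_le; lra|apply pow_incr; lra]. }
  rewrite sigS_eq by lia. unfold gam, xw.
  destruct (Nat.eqb_spec i 0) as [|Hne]; [lia|].
  assert (0 < g i) by (apply Hgp; lia).
  pose proof (Hg2 i Hi) as H2. rewrite MM_m0 in H2 by lia. fold dl in H2.
  assert (0 < dl ^ i) by (apply pow_lt; auto).
  rewrite pow_div by lra.
  replace (sig1 i * g i * (w ^ i / dl ^ i)) with (g i / dl ^ i * sig1 i * w ^ i) by (field; lra).
  assert (0 <= g i / dl ^ i) by (left; apply Rdiv_lt_0_compat; auto).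
  split.
  + apply Rmult_le_pos; [apply Rmult_le_pos|]; lra.
  + apply bound_lemma; lra.
Qed.


Hypothesis Hgood : Good Ftot Etot c0 r0 w eta.

Lemma m0_C1 : m0 * C1 <= eta.
Proof. pose proof C1_nonneg. pose proof C2_nonneg. pose proof m0_pos.
  assert (m0 * (1 + C1 + C2) = eta) by (unfold m0; field; lra). nra. Qed.
Lemma m0_C2 : m0 * C2 <= eta.
Proof. pose proof C1_nonneg. pose proof C2_nonneg. pose proof m0_pos.
  assert (m0 * (1 + C1 + C2) = eta) by (unfold m0; field; lra). nra. Qed.

Lemma at_w : exists e B, 0 < e /\
  Hf n konS koff kcat lonS loff lcat Stot Etot Ftot xw = e * B /\
  RL Ftot Etot Stot c0 r0 w eta <= B <= RU Ftot Etot Stot c0 r0 w eta.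
Proof.
  set (p := sumR n (fun i => if Nat.eqb i 1 then 0 else TT i)).
  set (q := sumR n (fun i => if Nat.eqb i 1 then 0 else rh kcat lcat i * TT i)).
  set (s := sumR (S n) (fun i => if Nat.eqb i 0 then 0 else sgm konS koff kcat lonS loff lcat xw i)).
  assert (HPP : PP n konS koff kcat lonS loff lcat xw = c0 * w + p).
  { transitivity (sumR n TT); [reflexivity|]. rewrite (sumR_split n TT 1) by lia. rewrite TT1. reflexivity. }
  assert (HQQ : QQ n konS koff kcat lonS loff lcat xw = r0 * c0 * w + q).
  { transitivity (sumR n (fun i => rh kcat lcat i * TT i)).
    { unfold QQ. apply sumR_ext. intros. unfold TT. ring. }
    rewrite (sumR_split n _ 1) by lia. rewrite TT1. unfold r0, q. ring. }
  assert (HSS : SS n konS koff kcat lonS loff lcat xw = 1 + s).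
  { unfold SS. rewrite (sumR_split (S n) _ 0) by lia. reflexivity. }
  assert (Hp : 0 <= p).
  { apply sumR_nonneg. intros i Hi. destruct (Nat.eqb_spec i 1); [lra|]. apply TT_bound; auto. }
  assert (Hq : 0 <= q).
  { apply sumR_nonneg. intros i Hi. destruct (Nat.eqb_spec i 1); [lra|].
    apply Rmult_le_pos; [left; apply rh_pos'; auto|apply TT_bound; auto]. }
  assert (Hpq : p + q <= eta).
  { apply Rle_trans with (m0 * C1); [|apply m0_C1].
    unfold p, q, C1. rewrite <- sumR_plus, <- sumR_scal. apply sumR_le. intros i Hi.
    pose proof m0_pos. pose proof (Kc_pos' i Hi). pose proof (sig1_pos i ltac:(lia)). pose proof (rh_pos' i Hi).
    assert (0 < (1 + ww) ^ i) by (apply pow_lt; pose proof ww_pos; lra).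
    destruct (Nat.eqb_spec i 1).
    - assert (0 < m0 * (Kc kon koff kcat i * sig1 i * (1 + rh kcat lcat i) * (1 + ww) ^ i)).
      { apply Rmult_lt_0_compat; auto. apply Rmult_lt_0_compat; [apply Rmult_lt_0_compat; [apply Rmult_lt_0_compat|]|]; lra. }
      lra.
    - destruct (TT_bound i Hi n0).
      replace (m0 * (Kc kon koff kcat i * sig1 i * (1 + rh kcat lcat i) * (1 + ww) ^ i))
        with ((1 + rh kcat lcat i) * (m0 * (Kc kon koff kcat i * sig1 i * (1 + ww) ^ i))) by ring.
      assert (rh kcat lcat i * TT i <= rh kcat lcat i * (m0 * (Kc kon koff kcat i * sig1 i * (1 + ww) ^ i)))
        by (apply Rmult_le_compat_l; lra).
      lra. }
  assert (Hs : 0 <= s <= eta).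
  { split.
    - apply sumR_nonneg. intros i Hi. destruct (Nat.eqb_spec i 0); [lra|]. apply sigS_bound; lia.
    - apply Rle_trans with (m0 * C2); [|apply m0_C2].
      unfold s, C2. rewrite <- sumR_scal. apply sumR_le. intros i Hi.
      pose proof m0_pos. pose proof (sig1_pos i ltac:(lia)).
      assert (0 < (1 + ww) ^ i) by (apply pow_lt; pose proof ww_pos; lra).
      destruct (Nat.eqb_spec i 0).
      + left. apply Rmult_lt_0_compat; auto. apply Rmult_lt_0_compat; lra.
      + apply sigS_bound; lia. }
  destruct Hgood as [G1 [G2 G3]].
  pose proof dl_pos. pose proof dl_bounds.
  pose proof (est Ftot Etot Stot c0 r0 w eta dl p q s c0_pos r0_pos ltac:(lra) HF HE ltac:(lra)
     Hp Hq Hpq Hs G1 G2 G3) as HEst.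
  cbv zeta in HEst.
  set (z := (w / dl * Ftot - Etot) / (w / dl * (r0 * c0 * w + q) - (c0 * w + p))) in HEst.
  set (e := Etot - z * (c0 * w + p)) in HEst.
  destruct HEst as [Hden [Hz [He HB]]].
  exists e, (z * (1 + s) / e + z * (c0 * w + p + (r0 * c0 * w + q)) - Stot).
  assert (He0 : 0 < e) by lra.
  split; [auto|]. split; [|auto].
  unfold Hf, ef, zf. rewrite HPP, HQQ, HSS. unfold xw. fold z. fold e.
  rewrite max0_pos by auto. field. lra.
Qed.

End AtW.

Lemma part3_core : multistationary n konS koff kcat lonS loff lcat Stot Etot Ftot.
Proof.
  pose proof dl_pos. pose proof dl_bounds as [Hd1 Hd2]. pose proof Bg_ge1.
  pose proof wl_pos. pose proof ww_pos.
  pose proof (wlo_lt_wW Ftot Etot Stot c0 r0 c0_pos r0_pos HF HE Hr0E Hr0S HSF) as Hlw.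
  fold wl ww in Hlw.
  assert (HEF : 0 < Etot / Ftot) by (apply Rdiv_lt_0_compat; auto).
  assert (HK : Bg + Etot / Ftot + 1 < wl / dl).
  { apply Rmult_lt_reg_r with dl; auto. unfold Rdiv at 2. rewrite Rmult_assoc, Rinv_l, Rmult_1_r by lra.
    apply Rmult_lt_compat_r with (r := Bg + Etot / Ftot + 1) in Hd2; [|lra].
    unfold Rdiv in Hd2. rewrite Rmult_assoc, Rinv_l, Rmult_1_r in Hd2 by lra. lra. }
  destruct (at_w wl ltac:(lra) Hgl) as [e1 [B1 [He1 [E1 [HB1 _]]]]].
  destruct (at_w ww ltac:(lra) Hgw) as [e2 [B2 [He2 [E2 [_ HB2]]]]].
  apply (generic_ms n konS koff kcat lonS loff lcat Stot Etot Ftot ltac:(lia) konS_pos Hkoff Hkcat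
     lonS_pos Hloff Hlcat HS HE HF (xw wl) (xw ww)).
  - unfold xw. fold Bg. lra.
  - unfold xw. lra.
  - unfold xw. unfold Rdiv. apply Rmult_lt_compat_r; auto. apply Rinv_0_lt_compat; auto.
  - rewrite E1. apply Rmult_lt_0_compat; lra.
  - rewrite E2. assert (B2 < 0) by lra. nra.
Qed.

End Part3.


Lemma part3 : forall (n : nat) (Stot Etot Ftot : R),
  (2 <= n)%nat -> 0 < Stot -> 0 < Etot -> 0 < Ftot -> Stot > Ftot ->
  (forall (kon koff kcat lon loff lcat : nat -> R),
     pos_rates n kon -> pos_rates n koff -> pos_rates n kcat ->
     pos_rates n lon -> pos_rates n loff -> pos_rates n lcat ->
     kcat 1%nat / lcat 1%nat > Rmax (Ftot / (Stot - Ftot)) (Ftot / Etot) ->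
     exists M : nat -> R,
       (forall j, (1 <= j <= 4 * n - 2)%nat -> 0 < M j) /\
       forall g : nat -> R,
         (forall i, (1 <= i <= 2 * n)%nat -> 0 < g i) ->
         (forall i, (1 <= i <= 2 * n)%nat -> g i < M i) ->
         (forall i, (1 <= i <= n)%nat ->
            g i / g (n + 2)%nat ^ i < M (2 * n + i)%nat) ->
         (forall i, (3 <= i <= n)%nat ->
            g (n + i)%nat / g (n + 2)%nat ^ (i - 1) < M (3 * n - 2 + i)%nat) ->
         multistationary n
           (fun i => (if Nat.eqb i 0 then g (n + 1)%nat
                      else g (n + 1 + i)%nat / g i) * kon i)
           koff kcat
           (fun i => g (n + 1 + i)%nat / g (i + 1)%nat * lon i)
           loff lcat Stot Etot Ftot).
Proof.
  intros n Stot Etot Ftot Hn HS HE HF HSF kon koff kcat lon loff lcat Hkon Hkoff Hkcat Hlon Hloff Hlcat Hrat.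
  assert (Hr0E : Ftot / Etot < r0 kcat lcat).
  { unfold r0, rh. pose proof (Rmax_r (Ftot / (Stot - Ftot)) (Ftot / Etot)). lra. }
  assert (Hr0S : Ftot / (Stot - Ftot) < r0 kcat lcat).
  { unfold r0, rh. pose proof (Rmax_l (Ftot / (Stot - Ftot)) (Ftot / Etot)). lra. }
  assert (Hc0 : 0 < c0 kon koff kcat lon loff lcat) by (eapply (c0_pos n); eauto).
  assert (Hr0 : 0 < r0 kcat lcat) by (eapply (r0_pos n); eauto).
  destruct (choose_eta Ftot Etot Stot (c0 kon koff kcat lon loff lcat) (r0 kcat lcat) Hc0 Hr0 HF HE Hr0E Hr0S HSF)
    as [eta [Heta [G1 [G2 [G3 G4]]]]].
  exists (MM n kon koff kcat lon loff lcat Stot Etot Ftot eta). split.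
  - intros j _. eapply MM_pos; eauto.
  - intros g H1 H2 H3 H4.
    exact (part3_core n kon koff kcat lon loff lcat Stot Etot Ftot Hn Hkon Hkoff Hkcat Hlon Hloff Hlcat
      HS HE HF HSF Hr0E Hr0S eta Heta G1 G2 G3 G4 g H1 H2 H3 H4).
Qed.

Fixpoint minR (N : nat) (F : nat -> R) : R :=
  match N with O => F O | S m => Rmin (minR m F) (F (S m)) end.

Lemma minR_pos N F : (forall k, 0 < F k) -> 0 < minR N F.
Proof. intros H. induction N; simpl; auto. apply Rmin_pos; auto. Qed.
Lemma minR_le N F k : (k <= N)%nat -> minR N F <= F k.
Proof.
  induction N; intros Hk; simpl.
  - replace k with 0%nat by lia. lra.
  - destruct (Nat.eq_dec k (S N)) as [->|Hne].
    + apply Rmin_r.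
    + eapply Rle_trans; [apply Rmin_l|]. apply IHN. lia.
Qed.

Lemma rpow_small t a M : 0 < a -> 0 < M -> 0 < t -> t < exp (ln M / a) -> Rpower t a < M.
Proof.
  intros Ha HM Ht Htl. unfold Rpower.
  assert (ln t < ln M / a).
  { rewrite <- (ln_exp (ln M / a)). apply ln_increasing; auto. }
  rewrite <- (exp_ln M) by auto. apply exp_increasing.
  apply Rmult_lt_compat_l with (r := a) in H; auto.
  replace (a * (ln M / a)) with (ln M) in H by (field; lra). lra.
Qed.

Lemma rpow_div_pow t x y i : 0 < t ->
  Rpower t x / Rpower t y ^ i = Rpower t (x - INR i * y).
Proof.
  intros Ht. rewrite <- (Rpower_pow i (Rpower t y)) by (apply exp_pos).
  rewrite Rpower_mult. unfold Rminus. rewrite Rpower_plus, Rpower_Ropp.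
  replace (y * INR i) with (INR i * y) by ring. reflexivity.
Qed.

Lemma rpow_div t x y : Rpower t x / Rpower t y = Rpower t (x - y).
Proof. unfold Rminus. rewrite Rpower_plus, Rpower_Ropp. reflexivity. Qed.

Lemma part2 : forall (n : nat) (Stot Etot Ftot : R),
  (2 <= n)%nat -> 0 < Stot -> 0 < Etot -> 0 < Ftot -> Stot > Ftot ->
  (forall (kon koff kcat lon loff lcat : nat -> R) (h : nat -> R),
     pos_rates n kon -> pos_rates n koff -> pos_rates n kcat ->
     pos_rates n lon -> pos_rates n loff -> pos_rates n lcat ->
     kcat 1%nat / lcat 1%nat > Rmax (Ftot / (Stot - Ftot)) (Ftot / Etot) ->
     (forall j, (4 <= j <= 2 * n + 3)%nat -> 0 < h j) ->
     (forall i, (1 <= i <= n)%nat -> INR i * h (n + 5)%nat < h (i + 3)%nat) ->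
     (forall i, (1 <= i <= n)%nat -> i <> 2%nat ->
        INR (i - 1) * h (n + 5)%nat < h (n + i + 3)%nat) ->
     exists t0, 0 < t0 /\
       forall t, 0 < t < t0 ->
         multistationary n
           (fun i => (if Nat.eqb i 0 then Rpower t (h (n + 4)%nat)
                      else Rpower t (h (n + 4 + i)%nat - h (i + 3)%nat)) * kon i)
           koff kcat
           (fun i => Rpower t (h (n + 4 + i)%nat - h (i + 4)%nat) * lon i)
           loff lcat Stot Etot Ftot).
Proof.
  intros n Stot Etot Ftot Hn HS HE HF HSF kon koff kcat lon loff lcat h Hkon Hkoff Hkcat Hlon Hloff Hlcat Hrat
    Hh1 Hh2 Hh3.
  destruct (part3 n Stot Etot Ftot Hn HS HE HF HSF kon koff kcat lon loff lcat Hkon Hkoff Hkcat Hlon Hloff Hlcat Hrat)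
    as [M [HMpos HM]].
  set (tA := fun k => exp (ln (M k) / h (k + 3)%nat)).
  set (tB := fun i => exp (ln (M (2 * n + i)%nat) / (h (i + 3)%nat - INR i * h (n + 5)%nat))).
  set (tC := fun i => exp (ln (M (3 * n - 2 + i)%nat) / (h (n + i + 3)%nat - INR (i - 1) * h (n + 5)%nat))).
  exists (Rmin 1 (Rmin (minR (2 * n) tA) (Rmin (minR n tB) (minR n tC)))).
  split.
  { repeat apply Rmin_pos; try lra; apply minR_pos; intros; apply exp_pos. }
  intros t [Ht0 Ht].
  pose proof (Rmin_r 1 (Rmin (minR (2 * n) tA) (Rmin (minR n tB) (minR n tC)))).
  pose proof (Rmin_l (minR (2 * n) tA) (Rmin (minR n tB) (minR n tC))).
  pose proof (Rmin_r (minR (2 * n) tA) (Rmin (minR n tB) (minR n tC))).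
  pose proof (Rmin_l (minR n tB) (minR n tC)).
  pose proof (Rmin_r (minR n tB) (minR n tC)).
  set (g := fun k => Rpower t (h (k + 3)%nat)).
  assert (Hg5 : g (n + 2)%nat = Rpower t (h (n + 5)%nat)).
  { unfold g. replace (n + 2 + 3)%nat with (n + 5)%nat by lia. reflexivity. }
  assert (Hms := HM g).
  assert (EK : (fun i => (if Nat.eqb i 0 then g (n + 1)%nat else g (n + 1 + i)%nat / g i) * kon i) =
               (fun i => (if Nat.eqb i 0 then Rpower t (h (n + 4)%nat)
                      else Rpower t (h (n + 4 + i)%nat - h (i + 3)%nat)) * kon i)).
  { apply functional_extensionality. intros i. unfold g. destruct (Nat.eqb i 0).
    - replace (n + 1 + 3)%nat with (n + 4)%nat by lia. reflexivity.
    - rewrite rpow_div. replace (n + 1 + i + 3)%nat with (n + 4 + i)%nat by lia. reflexivity. }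
  assert (EL : (fun i => g (n + 1 + i)%nat / g (i + 1)%nat * lon i) =
               (fun i => Rpower t (h (n + 4 + i)%nat - h (i + 4)%nat) * lon i)).
  { apply functional_extensionality. intros i. unfold g. rewrite rpow_div.
    replace (n + 1 + i + 3)%nat with (n + 4 + i)%nat by lia.
    replace (i + 1 + 3)%nat with (i + 4)%nat by lia. reflexivity. }
  rewrite <- EK, <- EL. apply Hms.
  - intros i Hi. unfold g, Rpower. apply exp_pos.
  - intros i Hi. unfold g. apply rpow_small; auto.
    + apply Hh1. lia.
    + apply HMpos. lia.
    + pose proof (minR_le (2 * n) tA i ltac:(lia)). unfold tA in *. lra.
  - intros i Hi. rewrite Hg5. unfold g. rewrite rpow_div_pow by auto.
    apply rpow_small; auto.
    + pose proof (Hh2 i Hi). lra.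
    + apply HMpos. lia.
    + pose proof (minR_le n tB i ltac:(lia)). unfold tB in *. lra.
  - intros i Hi. rewrite Hg5. unfold g. rewrite rpow_div_pow by auto.
    replace (n + i + 3)%nat with (n + i + 3)%nat by lia.
    apply rpow_small; auto.
    + pose proof (Hh3 i ltac:(lia) ltac:(lia)). lra.
    + apply HMpos. lia.
    + pose proof (minR_le n tC i ltac:(lia)). unfold tC in *. lra.
Qed.

Lemma part1 : forall (n : nat) (Stot Etot Ftot : R),
  (2 <= n)%nat -> 0 < Stot -> 0 < Etot -> 0 < Ftot -> Stot > Ftot ->
  (exists kon koff kcat lon loff lcat : nat -> R,
     pos_rates n kon /\ pos_rates n koff /\ pos_rates n kcat /\
     pos_rates n lon /\ pos_rates n loff /\ pos_rates n lcat /\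
     multistationary n kon koff kcat lon loff lcat Stot Etot Ftot).
Proof.
  intros n Stot Etot Ftot Hn HS HE HF HSF.
  set (K := 1 + Ftot / (Stot - Ftot) + Ftot / Etot).
  set (one := fun _ : nat => 1).
  set (kc := fun i : nat => if Nat.eqb i 1 then K else 1).
  set (h := fun k : nat => if Nat.eqb k (n + 5) then 1 else INR (2 * n + 2)).
  assert (Ha : 0 < Ftot / (Stot - Ftot)) by (apply Rdiv_lt_0_compat; lra).
  assert (Hb : 0 < Ftot / Etot) by (apply Rdiv_lt_0_compat; lra).
  assert (Hone : pos_rates n one) by (intros i _; unfold one; lra).
  assert (Hkc : pos_rates n kc) by (intros i _; unfold kc; destruct (Nat.eqb i 1); unfold K; lra).
  assert (HK : kc 1%nat / one 1%nat > Rmax (Ftot / (Stot - Ftot)) (Ftot / Etot)).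
  { unfold kc, one. simpl. unfold Rdiv at 1. rewrite Rinv_1, Rmult_1_r. unfold K.
    apply Rmax_lub_lt; lra. }
  assert (Hbig : forall i, (i <= n)%nat -> INR i < INR (2 * n + 2)).
  { intros. apply lt_INR. lia. }
  assert (Hh1 : forall j, (4 <= j <= 2 * n + 3)%nat -> 0 < h j).
  { intros j _. unfold h. destruct (Nat.eqb j (n + 5)); [lra|]. apply lt_0_INR. lia. }
  assert (Hh2 : forall i, (1 <= i <= n)%nat -> INR i * h (n + 5)%nat < h (i + 3)%nat).
  { intros i Hi. unfold h. rewrite Nat.eqb_refl. destruct (Nat.eqb_spec (i + 3) (n + 5)); [lia|].
    rewrite Rmult_1_r. apply Hbig. lia. }
  assert (Hh3 : forall i, (1 <= i <= n)%nat -> i <> 2%nat ->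
        INR (i - 1) * h (n + 5)%nat < h (n + i + 3)%nat).
  { intros i Hi Hi2. unfold h. rewrite Nat.eqb_refl. destruct (Nat.eqb_spec (n + i + 3) (n + 5)); [lia|].
    rewrite Rmult_1_r. apply Hbig. lia. }
  destruct (part2 n Stot Etot Ftot Hn HS HE HF HSF one one kc one one one h Hone Hone Hkc Hone Hone Hone HK
     Hh1 Hh2 Hh3) as [t0 [Ht0 Hms]].
  set (t := t0 / 2).
  assert (Ht : 0 < t < t0) by (unfold t; lra).
  eexists _, one, kc, _, one, one.
  split; [|split; [exact Hone|split; [exact Hkc|split; [|split; [exact Hone|split; [exact Hone|]]]]]].
  3: exact (Hms t Ht).
  - intros i Hi. apply Rmult_lt_0_compat; [|unfold one; lra]. destruct (Nat.eqb i 0); apply exp_pos.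
  - intros i Hi. apply Rmult_lt_0_compat; [apply exp_pos|unfold one; lra].
Qed.

Theorem theorem4p1 :
  forall (n : nat) (Stot Etot Ftot : R),
  (2 <= n)%nat -> 0 < Stot -> 0 < Etot -> 0 < Ftot -> Stot > Ftot ->
  (exists kon koff kcat lon loff lcat : nat -> R,
     pos_rates n kon /\ pos_rates n koff /\ pos_rates n kcat /\
     pos_rates n lon /\ pos_rates n loff /\ pos_rates n lcat /\
     multistationary n kon koff kcat lon loff lcat Stot Etot Ftot)
  /\
  (forall (kon koff kcat lon loff lcat : nat -> R) (h : nat -> R),
     pos_rates n kon -> pos_rates n koff -> pos_rates n kcat ->
     pos_rates n lon -> pos_rates n loff -> pos_rates n lcat ->
     kcat 1%nat / lcat 1%nat > Rmax (Ftot / (Stot - Ftot)) (Ftot / Etot) ->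
     (forall j, (4 <= j <= 2 * n + 3)%nat -> 0 < h j) ->
     (forall i, (1 <= i <= n)%nat -> INR i * h (n + 5)%nat < h (i + 3)%nat) ->
     (forall i, (1 <= i <= n)%nat -> i <> 2%nat ->
        INR (i - 1) * h (n + 5)%nat < h (n + i + 3)%nat) ->
     exists t0, 0 < t0 /\
       forall t, 0 < t < t0 ->
         multistationary n
           (fun i => (if Nat.eqb i 0 then Rpower t (h (n + 4)%nat)
                      else Rpower t (h (n + 4 + i)%nat - h (i + 3)%nat)) * kon i)
           koff kcat
           (fun i => Rpower t (h (n + 4 + i)%nat - h (i + 4)%nat) * lon i)
           loff lcat Stot Etot Ftot)
  /\
  (forall (kon koff kcat lon loff lcat : nat -> R),
     pos_rates n kon -> pos_rates n koff -> pos_rates n kcat ->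
     pos_rates n lon -> pos_rates n loff -> pos_rates n lcat ->
     kcat 1%nat / lcat 1%nat > Rmax (Ftot / (Stot - Ftot)) (Ftot / Etot) ->
     exists M : nat -> R,
       (forall j, (1 <= j <= 4 * n - 2)%nat -> 0 < M j) /\
       forall g : nat -> R,
         (forall i, (1 <= i <= 2 * n)%nat -> 0 < g i) ->
         (forall i, (1 <= i <= 2 * n)%nat -> g i < M i) ->
         (forall i, (1 <= i <= n)%nat ->
            g i / g (n + 2)%nat ^ i < M (2 * n + i)%nat) ->
         (forall i, (3 <= i <= n)%nat ->
            g (n + i)%nat / g (n + 2)%nat ^ (i - 1) < M (3 * n - 2 + i)%nat) ->
         multistationary n
           (fun i => (if Nat.eqb i 0 then g (n + 1)%nat
                      else g (n + 1 + i)%nat / g i) * kon i)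
           koff kcat
           (fun i => g (n + 1 + i)%nat / g (i + 1)%nat * lon i)
           loff lcat Stot Etot Ftot).
Proof.
  intros n Stot Etot Ftot Hn HS HE HF HSF.
  split; [apply part1; auto|split].
  - exact (part2 n Stot Etot Ftot Hn HS HE HF HSF).
  - exact (part3 n Stot Etot Ftot Hn HS HE HF HSF).
Qed.
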